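(* Let $k\ge1$, let $(A,t)$ be a $\mathcal{C}_k$-algebra, $a\in A$ and $H\subseteq A$. Then: (i) $D(a)=\big[\bigwedge_{j=1}^{k}t^j(\triangle a)\big)$, the principal lattice filter generated by $\bigwedge_{j=1}^{k}t^j(\triangle a)$; (ii) $D(H\cup\{a\})=\{x\in A: a\rightharpoondown x\in D(H)\}$; (iii) $D(a)=\{x\in A: a\rightharpoondown x=1\}$.
   Context: A modal pseudocomplemented De Morgan algebra ($mpM$-algebra) is an algebra $\langle A,\wedge,\vee,\sim,{}^\ast,0,1\rangle$ such that $\langle A,\wedge,\vee,\sim,0,1\rangle$ is a De Morgan algebra (bounded distributive lattice with $\sim\sim x=x$, $\sim(x\vee y)=\sim x\wedge\sim y$), $x^\ast$ is the pseudocomplement of $x$, and $x\vee\sim x\le x\vee x^\ast$. Put $\nabla x=\sim(\sim x\wedge x^\ast)$, $\triangle x=\sim\nabla\sim x$. A $\mathcal{C}_k$-algebra ($k\ge1$) is a pair $(A,t)$ with $A$ an $mpM$-algebra and $t$ an $mpM$-automorphism of $A$ with $t^k=\mathrm{id}$. The cyclic implication is $a\rightharpoondown b=\bigvee_{i=1}^{k}\nabla(\sim t^i(a))\vee b$. A cyclic deductive system is a set $D\subseteq A$ with $1\in D$ such that $x,\,x\rightharpoondown y\in D$ imply $y\in D$. For $H\subseteq A$, $D(H)$ denotes the smallest cyclic deductive system containing $H$, and $D(a)=D(\{a\})$. *)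

(* Defs.v *)
(* the carrier of an mpM-algebra is a bounded distributive
   lattice (mathcomp's tbDistrLatticeType), equipped with a De Morgan
   negation [neg] and a pseudocomplement [star]. *)
From mathcomp Require Import all_boot all_order.
Set Implicit Arguments. Unset Strict Implicit. Unset Printing Implicit Defensive.
Import Order.TTheory.
Local Open Scope order_scope.

Section Defs.
Context {d : Order.disp_t} {A : tbDistrLatticeType d}.

Definition is_mpM (neg star : A -> A) : Prop :=
  [/\ (forall x, neg (neg x) = x),
      (forall x y, neg (x `|` y) = neg x `&` neg y),
      (forall x y, x `&` y = \bot <-> y <= star x)
    & (forall x, x `|` neg x <= x `|` star x)].

Definition nabla (neg star : A -> A) (x : A) : A := neg (neg x `&` star x).
Definition delta (neg star : A -> A) (x : A) : A := neg (nabla neg star (neg x)).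

Definition is_mpM_aut (neg star t : A -> A) : Prop :=
  bijective t /\
  (forall x y, t (x `&` y) = t x `&` t y) /\
  (forall x y, t (x `|` y) = t x `|` t y) /\
  (forall x, t (neg x) = neg (t x)) /\
  (forall x, t (star x) = star (t x)) /\
  t \bot = \bot /\ t \top = \top.

Definition is_Ck_alg (k : nat) (neg star t : A -> A) : Prop :=
  [/\ is_mpM neg star, is_mpM_aut neg star t & forall x, iter k t x = x].

Definition cimp (k : nat) (neg star t : A -> A) (a b : A) : A :=
  (\join_(1 <= i < k.+1) nabla neg star (neg (iter i t a))) `|` b.

Definition cyclic_ds (k : nat) (neg star t : A -> A) (D : A -> Prop) : Prop :=
  D \top /\ (forall x y, D x -> D (cimp k neg star t x y) -> D y).

Definition Dgen (k : nat) (neg star t : A -> A) (H : A -> Prop) (x : A) : Prop :=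
  forall D, cyclic_ds k neg star t D -> (forall y, H y -> D y) -> D x.

End Defs.

(* Main.v *)
Require Import Defs.
From mathcomp Require Import all_boot all_order.
Import Order.TTheory.
Local Open Scope order_scope.

Section Aux.
Context {d : Order.disp_t} {A : tbDistrLatticeType d} (neg star t : A -> A) (k : nat).
Implicit Types (x y b c m : A).
Hypothesis hk : (0 < k)%N.
Hypothesis hnn : forall x, neg (neg x) = x.
Hypothesis hnU : forall x y, neg (x `|` y) = neg x `&` neg y.
Hypothesis hst : forall x y, x `&` y = \bot <-> y <= star x.
Hypothesis hax : forall x, x `|` neg x <= x `|` star x.
Hypothesis tI : forall x y, t (x `&` y) = t x `&` t y.
Hypothesis tU : forall x y, t (x `|` y) = t x `|` t y.
Hypothesis tN : forall x, t (neg x) = neg (t x).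
Hypothesis tS : forall x, t (star x) = star (t x).
Hypothesis tB : t \bot = \bot.
Hypothesis tT : t \top = \top.
Hypothesis tk : forall x, iter k t x = x.

Lemma nI x y : neg (x `&` y) = neg x `|` neg y.
Proof. by rewrite -{1}(hnn x) -{1}(hnn y) -hnU hnn. Qed.

Lemma nle {x y} : x <= y -> neg y <= neg x.
Proof. by move=> /join_idPr h; rewrite -h hnU leIl. Qed.

Lemma nB : neg \bot = \top.
Proof.
apply/le_anti; rewrite lex1 /= -{1}(hnn \top); apply: nle; exact: le0x.
Qed.

Lemma nT : neg \top = \bot.
Proof. by rewrite -nB hnn. Qed.

Lemma starI x : x `&` star x = \bot.
Proof. by apply/hst. Qed.

Lemma star_anti {x y} : x <= y -> star y <= star x.
Proof.
move=> h; apply/hst; apply/le_anti; rewrite le0x andbT -(starI y).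
exact: leI2.
Qed.

Lemma lbot x : x <= \bot -> x = \bot.
Proof. by move=> h; apply/le_anti; rewrite h le0x. Qed.

Lemma ltop x : \top <= x -> x = \top.
Proof. by move=> h; apply/le_anti; rewrite h lex1. Qed.

Definition comp (b : A) := b `&` neg b = \bot /\ b `|` neg b = \top.

Lemma comp_le b x : comp b -> (b <= x) <-> (neg b `|` x = \top).
Proof.
case=> h1 h2; split.
- move=> hb; apply/ltop; rewrite -h2 leUx (le_trans hb (leUr _ _)) leUl //.
- move=> h; have: b = b `&` (neg b `|` x) by rewrite h meetx1.
  rewrite meetUr h1 join0x => ->; exact: leIr.
Qed.

Lemma comp_meet b x : comp b -> b `&` (neg b `|` x) = b `&` x.
Proof. by case=> h1 _; rewrite meetUr h1 join0x. Qed.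

Lemma comp_neg b : comp b -> comp (neg b).
Proof. by case=> h1 h2; rewrite /comp hnn meetC joinC. Qed.

Lemma comp_meetI b c : comp b -> comp c -> comp (b `&` c).
Proof.
case=> b1 b2 [c1 c2]; split.
- apply: lbot; rewrite nI meetUr leUx; apply/andP; split.
  + by rewrite -b1; apply: leI2 (leIl _ _) (lexx _).
  + by rewrite -c1; apply: leI2 (leIr _ _) (lexx _).
- apply: ltop; rewrite nI joinIl lexI; apply/andP; split.
  + by rewrite -b2; apply: leU2 (lexx _) (leUl _ _).
  + by rewrite -c2; apply: leU2 (lexx _) (leUr _ _).
Qed.

Lemma comp_top : comp \top.
Proof. by rewrite /comp nT meetx0 joinx0. Qed.

Lemma iterN j x : iter j t (neg x) = neg (iter j t x).
Proof. by elim: j => //= j ->; rewrite tN. Qed.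
Lemma iterS j x : iter j t (star x) = star (iter j t x).
Proof. by elim: j => //= j ->; rewrite tS. Qed.
Lemma iterI j x y : iter j t (x `&` y) = iter j t x `&` iter j t y.
Proof. by elim: j => //= j ->; rewrite tI. Qed.
Lemma iterU j x y : iter j t (x `|` y) = iter j t x `|` iter j t y.
Proof. by elim: j => //= j ->; rewrite tU. Qed.
Lemma iterB j : iter j t \bot = \bot.
Proof. by elim: j => //= j ->; rewrite tB. Qed.
Lemma iterT j : iter j t \top = \top.
Proof. by elim: j => //= j ->; rewrite tT. Qed.

Lemma iter_mono j {x y} : x <= y -> iter j t x <= iter j t y.
Proof. by move=> /meet_idPl h; apply/meet_idPl; rewrite -iterI h. Qed.

Lemma comp_iter j b : comp b -> comp (iter j t b).
Proof. by case=> h1 h2; rewrite /comp -iterN -iterI -iterU h1 h2 iterB iterT. Qed.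

Lemma deltaE x : delta neg star x = x `&` star (neg x).
Proof. by rewrite /delta /nabla !hnn. Qed.

Lemma iter_delta j x : iter j t (delta neg star x) = delta neg star (iter j t x).
Proof. by rewrite !deltaE iterI iterS iterN. Qed.

Lemma delta_mono x y : x <= y -> delta neg star x <= delta neg star y.
Proof. by move=> h; rewrite !deltaE leI2 // star_anti // nle. Qed.

Lemma delta_le x : delta neg star x <= x.
Proof. by rewrite deltaE leIl. Qed.

Lemma comp_delta_id b : comp b -> delta neg star b = b.
Proof.
case=> h1 _; rewrite deltaE; apply/meet_l/hst; by rewrite meetC.
Qed.

Lemma comp_delta a : comp (delta neg star a).
Proof.
rewrite deltaE; set y := star (neg a).
have f1 : neg a `&` y = \bot by exact: starI.
have h3 : neg a `|` a <= neg a `|` y by have := hax (neg a); rewrite hnn.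
have f2 : a `&` neg y <= a `&` neg a.
  by have := nle h3; rewrite !hnU hnn.
have g : a `|` (neg a `|` neg y) = \top.
  rewrite -(hnn (_ `|` _)) !hnU !hnn.
  have -> : neg a `&` (a `&` y) = \bot by apply: lbot; rewrite -f1 meetCA leIr.
  exact: nB.
split.
- apply: lbot; rewrite nI meetUr leUx; apply/andP; split.
  + rewrite -f1 lexI leIr /=; exact: le_trans (leIl _ _) (leIr _ _).
  + rewrite meetAC -f1; apply: le_trans (leI2 f2 (lexx y)) _.
    exact: leI2 (leIr _ _) (lexx _).
- apply: ltop; rewrite nI joinIl lexI -g; apply/andP; split => //.
  rewrite leUx leUr andbT.
  apply: (le_trans (leUr a (neg a))); apply: (le_trans h3).
  rewrite leUx leUl andbT; apply: (le_trans _ (leUr _ _)); exact: leUl.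
Qed.

Definition M x := \meet_(1 <= j < k.+1) iter j t (delta neg star x).

Lemma M_le_term x j : (1 <= j <= k)%N -> M x <= iter j t (delta neg star x).
Proof.
move=> hj; apply: meets_inf_seq => //; rewrite mem_index_iota ltnS //.
Qed.

Lemma M_le x : M x <= x.
Proof.
apply: le_trans (M_le_term x k _) _; first by rewrite hk leqnn.
rewrite tk; exact: delta_le.
Qed.

Lemma comp_M x : comp (M x).
Proof.
rewrite /M; apply: big_ind; [exact: comp_top | exact: comp_meetI |].
move=> i _; apply: comp_iter; exact: comp_delta.
Qed.

Lemma tM x : t (M x) = M x.
Proof.
rewrite /M (big_morph t tI tT).
rewrite big_nat_recr // big_nat_recl //= -/(iter k.+1 t _).
by rewrite iterSr tk meetC.
Qed.

Lemma iter_M j x : iter j t (M x) = M x.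
Proof. by elim: j => //= j ->; rewrite tM. Qed.

Lemma M_mono x y : x <= y -> M x <= M y.
Proof.
move=> h; apply/meetsP_seq => j; rewrite mem_index_iota ltnS => hj _.
apply: (le_trans (M_le_term x j hj)); apply: iter_mono; exact: delta_mono.
Qed.

Lemma M_idem b : M (M b) = M b.
Proof.
apply/le_anti; rewrite M_le /=; apply/meetsP_seq => j _ _.
rewrite comp_delta_id; last exact: comp_M.
by rewrite iter_M.
Qed.

Lemma star_join x y : star (x `|` y) = star x `&` star y.
Proof.
apply/le_anti; rewrite lexI !star_anti ?leUl ?leUr //=.
apply/hst; apply: lbot; rewrite meetUl leUx; apply/andP; split.
- by rewrite -(starI x) meetA leIl.
- by rewrite -(starI y) meetCA leIr.
Qed.

Lemma delta_meet x y :
  delta neg star (x `&` y) = delta neg star x `&` delta neg star y.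
Proof. by rewrite !deltaE nI star_join meetACA. Qed.

Lemma M_meet_le m x : comp m -> (forall j, iter j t m = m) ->
  M (neg m `|` x) `&` m <= M x.
Proof.
move=> cm hm; apply/meetsP_seq => j; rewrite mem_index_iota ltnS => hj _.
apply: (le_trans (leI2 (M_le_term _ j hj) (lexx m))).
rewrite -{2}(hm j) -iterI; apply: iter_mono.
rewrite -{2}(comp_delta_id _ cm) -delta_meet; apply: delta_mono.
by rewrite meetC comp_meet // leIr.
Qed.

Lemma cimpE a b : cimp k neg star t a b = neg (M a) `|` b.
Proof.
rewrite /cimp /M (big_morph neg nI nT); congr (_ `|` _).
by apply: eq_bigr => i _; rewrite /nabla hnn iter_delta deltaE.
Qed.

Section DS.
Variable D : A -> Prop.
Hypothesis hD : cyclic_ds k neg star t D.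

Lemma ds_top : D \top.
Proof. by case: hD. Qed.

Lemma ds_mp {x y} : D x -> D (neg (M x) `|` y) -> D y.
Proof. by case: hD => _ h hx; rewrite -cimpE; apply: h. Qed.

Lemma ds_up {x y} : D x -> x <= y -> D y.
Proof.
move=> hx hxy; apply: (ds_mp hx).
have -> : neg (M x) `|` y = \top.
  by apply/(comp_le _ _ (comp_M x)); exact: le_trans (M_le x) hxy.
exact: ds_top.
Qed.

Lemma ds_M {x} : D x -> D (M x).
Proof.
move=> hx; apply: (ds_mp hx); case: (comp_M x) => _ h.
by rewrite joinC h; exact: ds_top.
Qed.

Lemma ds_meet {x y} : D x -> D y -> D (x `&` y).
Proof.
move=> hx hy; apply: (ds_mp hx); apply: (ds_up (ds_M hy)).
case: (comp_M x) => _ h2.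
rewrite -[M y]meetx1 -h2 meetUr leUx; apply/andP; split.
- apply: lexUr; rewrite lexI; apply/andP; split.
  + exact: le_trans (leIr _ _) (M_le x).
  + exact: le_trans (leIl _ _) (M_le y).
- exact: le_trans (leIr _ _) (leUl _ _).
Qed.

End DS.
Arguments ds_top {D} hD.
Arguments ds_mp {D} hD {x y}.
Arguments ds_up {D} hD {x y}.
Arguments ds_M {D} hD {x}.
Arguments ds_meet {D} hD {x y}.

Lemma Dgen_ds H : cyclic_ds k neg star t (Dgen k neg star t H).
Proof.
split; first by move=> D [hD _] _.
move=> x y hx hxy D hD hH; exact: (hD.2 x y (hx D hD hH) (hxy D hD hH)).
Qed.

Lemma Dgen_H (H : A -> Prop) y : H y -> Dgen k neg star t H y.
Proof. by move=> hy D _ hH; apply: hH. Qed.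

Lemma main_aux a (H : A -> Prop) :
  (forall x, Dgen k neg star t (fun y => y = a) x <-> M a <= x) /\
  (forall x, Dgen k neg star t (fun y => H y \/ y = a) x <->
     Dgen k neg star t H (cimp k neg star t a x)) /\
  (forall x, Dgen k neg star t (fun y => y = a) x <->
     cimp k neg star t a x = \top).
Proof.
set m := M a.
have cm : comp m by exact: comp_M.
have hm : forall j, iter j t m = m by move=> j; exact: iter_M.
have E : forall x, m <= x <-> neg m `|` x = \top by move=> x; exact: comp_le.
have P1 : forall x, Dgen k neg star t (fun y => y = a) x <-> m <= x.
  move=> x; split.
  - move=> hx; apply: (hx (fun z => m <= z)) => //; last by move=> y ->; exact: M_le.
    split; first exact: lex1.
    move=> u v hu; rewrite cimpE => huv.
    have h1 : m <= M u by rewrite /m -{1}(M_idem a); exact: M_mono.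
    have : m <= M u `&` (neg (M u) `|` v) by rewrite lexI h1.
    rewrite comp_meet; last exact: comp_M.
    by move=> h; exact: le_trans h (leIr _ _).
  - move=> /E hx; apply: (ds_mp (Dgen_ds _) (x := a)); first exact: Dgen_H.
    rewrite -/m hx; exact: (ds_top (Dgen_ds _)).
split => //; split; last first.
  move=> x; rewrite cimpE -/m; split => [/P1 /E //| /E /P1 //].
move=> x; split.
- move=> hx; apply: (hx (fun z => Dgen k neg star t H (cimp k neg star t a z))).
  + split.
    * rewrite cimpE joinx1; exact: (ds_top (Dgen_ds _)).
    * move=> u v; rewrite !cimpE -/m => hu huv.
      have G := Dgen_ds H.
      apply: (ds_mp G hu); apply: (ds_up G huv).
      have h2 := nle (M_meet_le m u cm hm); rewrite nI in h2.
      rewrite leUx leUx; apply/andP; split; last (apply/andP; split).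
      + by apply: lexUr; apply: leUl.
      + apply: (le_trans h2); rewrite leUx leUl /=.
        by apply: lexUr; apply: leUl.
      + by apply: lexUr; apply: leUr.
  + move=> y [hy|->]; rewrite cimpE -/m.
    * apply: (ds_up (Dgen_ds _) (Dgen_H _ _ hy)); exact: leUr.
    * have -> : neg m `|` a = \top by apply/E; exact: M_le.
      exact: (ds_top (Dgen_ds _)).
- move=> hx; apply: (ds_mp (Dgen_ds _) (x := a)); first by apply: Dgen_H; right.
  move=> D hD hH; rewrite /m -cimpE; apply: (hx D hD) => y hy; apply: hH; left; exact: hy.
Qed.

End Aux.

Theorem lemma4p1 (k : nat) (hk : (1 <= k)%N) (d : Order.disp_t)
  (A : tbDistrLatticeType d) (neg star t : A -> A)
  (hA : is_Ck_alg k neg star t) (a : A) (H : A -> Prop) :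
  (forall x, Dgen k neg star t (fun y => y = a) x <->
     (\meet_(1 <= j < k.+1) (iter j t (delta neg star a)) <= x)%O) /\
  (forall x, Dgen k neg star t (fun y => H y \/ y = a) x <->
     Dgen k neg star t H (cimp k neg star t a x)) /\
  (forall x, Dgen k neg star t (fun y => y = a) x <->
     cimp k neg star t a x = \top).
Proof.
case: hA => [[hnn hnU hst hax] [_ [tI [tU [tN [tS [tB tT]]]]]] tk].
have [h1 [h2 h3]] := main_aux neg star t k hk hnn hnU hst hax tI tU tN tS tB tT tk a H.
split; first exact: h1.
split; first exact: h2.
exact: h3.
Qed.
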